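(* Let $A$ be a finite skew brace such that $\Lambda(A)$ has exactly one vertex. Then $(A/\ker\lambda,\circ)$ and $(\operatorname{Fix}(A),+)$ are isomorphic abelian groups. Moreover $x+f-x=-f$ for all $f\in\operatorname{Fix}(A)$ and all $x\in A\setminus\operatorname{Fix}(A)$.
   Context: A skew brace is a triple $(A,+,\circ)$ where $(A,+)$ and $(A,\circ)$ are groups with $a\circ(b+c)=a\circ b-a+a\circ c$. $\lambda\colon(A,\circ)\to\operatorname{Aut}(A,+)$, $\lambda_a(b)=-a+a\circ b$, is a group homomorphism; $\ker\lambda$ is its kernel. $\operatorname{Fix}(A)=\{a\in A:\lambda_x(a)=a\ \forall x\in A\}$. $\Lambda(A)$ is the graph whose vertices are the $\lambda$-orbits of size $>1$, two distinct vertices $L_1,L_2$ adjacent iff $\gcd(|L_1|,|L_2|)\ne1$. *)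

(* Defs.v *)
From mathcomp Require Import all_boot.
Set Implicit Arguments. Unset Strict Implicit. Unset Printing Implicit Defensive.

Record skew_brace (T : finType) := SkewBrace {
  add : T -> T -> T;
  opp : T -> T;
  zero : T;
  circ : T -> T -> T;
  cinv : T -> T;
  one : T;
  addA : forall a b c, add a (add b c) = add (add a b) c;
  add0r : forall a, add zero a = a;
  addNr : forall a, add (opp a) a = zero;
  circA : forall a b c, circ a (circ b c) = circ (circ a b) c;
  circ1r : forall a, circ one a = a;
  circVr : forall a, circ (cinv a) a = one;
  brace_compat : forall a b c,
    circ a (add b c) = add (add (circ a b) (opp a)) (circ a c)
}.

Section SkewBraceDefs.
Variables (T : finType) (B : skew_brace T).

Definition lam (a b : T) : T := add B (opp B a) (circ B a b).

Definition kerlam : {set T} := [set a | [forall b, lam a b == b]].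

Definition Fixb : {set T} := [set a | [forall x, lam x a == a]].

Definition lam_orbit (a : T) : {set T} := [set lam x a | x in T].

Definition Lambda_vertices : {set {set T}} :=
  [set lam_orbit a | a in [set a : T | 1 < #|lam_orbit a|]].

End SkewBraceDefs.

(* Main.v *)
Require Import Defs.
From mathcomp Require Import all_boot zify.
Set Implicit Arguments. Unset Strict Implicit. Unset Printing Implicit Defensive.

Section Grp.
Variables (G : Type) (op : G -> G -> G) (inv : G -> G) (e : G).
Hypotheses (opA : forall a b c, op a (op b c) = op (op a b) c)
  (op1 : forall a, op e a = a) (opV : forall a, op (inv a) a = e).
Lemma g_Kl a b : op (inv a) (op a b) = b.
Proof. by rewrite opA opV op1. Qed.
Lemma g_mulV a : op a (inv a) = e.
Proof. have h := g_Kl (inv a) (op a (inv a)). by rewrite (g_Kl a) opV in h. Qed.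
Lemma g_mul1 a : op a e = a.
Proof. by rewrite -(opV a) opA g_mulV op1. Qed.
Lemma g_Kr a b : op a (op (inv a) b) = b.
Proof. by rewrite opA g_mulV op1. Qed.
Lemma g_Kr' a b : op (op a b) (inv b) = a.
Proof. by rewrite -opA g_mulV g_mul1. Qed.
Lemma g_Kr'' a b : op (op a (inv b)) b = a.
Proof. by rewrite -opA opV g_mul1. Qed.
Lemma g_inj a b c : op a b = op a c -> b = c.
Proof. by move=> h; rewrite -(g_Kl a b) h g_Kl. Qed.
Lemma g_injr a b c : op b a = op c a -> b = c.
Proof. by move=> h; rewrite -(g_Kr' b a) h g_Kr'. Qed.
Lemma g_invK a : inv (inv a) = a.
Proof. by apply: (g_inj (a := inv a)); rewrite opV g_mulV. Qed.
Lemma g_invM a b : inv (op a b) = op (inv b) (inv a).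
Proof. by apply: (g_inj (a := op a b)); rewrite g_mulV -opA g_Kr g_mulV. Qed.
Lemma g_uniqinv a b : op a b = e -> b = inv a.
Proof. by move=> h; apply: (g_inj (a := a)); rewrite h g_mulV. Qed.
End Grp.

Section Brace.
Variables (T : finType) (B : skew_brace T).
Local Notation "x \+ y" := (add B x y) (at level 50, left associativity).
Local Notation "\- x" := (opp B x) (at level 35).
Local Notation "x \* y" := (circ B x y) (at level 40, left associativity).
Local Notation z := (zero B).
Local Notation o1 := (@Defs.one _ B).

Local Notation aA := (@addA _ B). Local Notation a0 := (@add0r _ B). Local Notation aN := (@addNr _ B).
Local Notation cA := (@circA _ B). Local Notation c1 := (@circ1r _ B). Local Notation cV := (@circVr _ B).
Lemma addrN a : a \+ \- a = z. Proof. apply: (g_mulV aA a0 aN). Qed.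
Lemma addr0 a : a \+ z = a. Proof. apply: (g_mul1 aA a0 aN). Qed.
Lemma addKr a b : \- a \+ (a \+ b) = b. Proof. apply: (g_Kl aA a0 aN). Qed.
Lemma addNKr a b : a \+ (\- a \+ b) = b. Proof. apply: (g_Kr aA a0 aN). Qed.
Lemma addrK a b : a \+ b \+ \- b = a. Proof. apply: (g_Kr' aA a0 aN). Qed.
Lemma addrNK a b : a \+ \- b \+ b = a. Proof. apply: (g_Kr'' aA a0 aN). Qed.
Lemma addI a b c : a \+ b = a \+ c -> b = c. Proof. apply: (g_inj aA a0 aN). Qed.
Lemma addIr a b c : b \+ a = c \+ a -> b = c. Proof. apply: (g_injr aA a0 aN). Qed.
Lemma oppK a : \- \- a = a. Proof. apply: (g_invK aA a0 aN). Qed.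
Lemma oppK_inj a b : \- a = \- b -> a = b.
Proof. by move=> h; rewrite -(oppK a) h oppK. Qed.
Lemma oppD a b : \- (a \+ b) = \- b \+ \- a. Proof. apply: (g_invM aA a0 aN). Qed.
Lemma oppU a b : a \+ b = z -> b = \- a. Proof. apply: (g_uniqinv aA a0 aN). Qed.
Lemma opp0 : \- z = z. Proof. by rewrite -{2}(aN z) addr0. Qed.
Lemma circV a : a \* cinv B a = o1. Proof. apply: (g_mulV cA c1 cV). Qed.
Lemma circI a b c : a \* b = a \* c -> b = c. Proof. apply: (g_inj cA c1 cV). Qed.
Lemma circ1 a : a \* o1 = a. Proof. apply: (g_mul1 cA c1 cV). Qed.
Lemma circU a b : a \* b = o1 -> b = cinv B a. Proof. apply: (g_uniqinv cA c1 cV). Qed.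

Lemma circ0 a : a \* z = a.
Proof.
have h := brace_compat B a z z. rewrite a0 in h.
have h2 : a \* z \+ \- a = z.
  by apply: (addIr (a := a \* z)); rewrite -h a0.
by rewrite -(addrNK (a \* z) a) h2 a0.
Qed.
Lemma one0 : o1 = z. Proof. by rewrite -(circ0 (o1)) c1. Qed.

Lemma lamD a b c : lam B a (b \+ c) = lam B a b \+ lam B a c.
Proof. by rewrite /lam brace_compat !aA. Qed.
Lemma lam0 a : lam B a z = z. Proof. by rewrite /lam circ0 aN. Qed.
Lemma lamN a b : lam B a (\- b) = \- lam B a b.
Proof. by apply: oppU; rewrite -lamD addrN lam0. Qed.
Lemma lam1 c : lam B (o1) c = c. Proof. by rewrite /lam c1 one0 opp0 a0. Qed.
Lemma lamM a b c : lam B (a \* b) c = lam B a (lam B b c).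
Proof.
by rewrite {3}/lam lamD lamN /lam oppD oppK cA -!aA addNKr.
Qed.
Lemma lamK a c : lam B (cinv B a) (lam B a c) = c.
Proof. by rewrite -lamM cV lam1. Qed.
Lemma lamKV a c : lam B a (lam B (cinv B a) c) = c.
Proof. by rewrite -lamM circV lam1. Qed.

Lemma FixE f : f \in Fixb B -> forall x, lam B x f = f.
Proof. by rewrite inE => /forallP h x; apply/eqP. Qed.
Lemma FixI f : (forall x, lam B x f = f) -> f \in Fixb B.
Proof. by move=> h; rewrite inE; apply/forallP => x; apply/eqP. Qed.
Lemma kerE a : a \in kerlam B -> forall x, lam B a x = x.
Proof. by rewrite inE => /forallP h x; apply/eqP. Qed.
Lemma kerI a : (forall x, lam B a x = x) -> a \in kerlam B.
Proof. by move=> h; rewrite inE; apply/forallP => x; apply/eqP. Qed.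

Lemma Fix0 : z \in Fixb B. Proof. by apply: FixI => x; rewrite lam0. Qed.
Lemma FixD f g : f \in Fixb B -> g \in Fixb B -> f \+ g \in Fixb B.
Proof. by move=> hf hg; apply: FixI => x; rewrite lamD (FixE hf) (FixE hg). Qed.
Lemma FixN f : f \in Fixb B -> \- f \in Fixb B.
Proof. by move=> hf; apply: FixI => x; rewrite lamN (FixE hf). Qed.

Lemma orbitP a y : reflect (exists x, y = lam B x a) (y \in lam_orbit B a).
Proof.
apply: (iffP idP).
  by case/imsetP => x _ ->; exists x.
by case=> x ->; apply: imset_f.
Qed.

Lemma orbit_gt1 a : a \notin Fixb B -> 1 < #|lam_orbit B a|.
Proof.
move=> ha; apply/card_gt1P.
have [x hx] : exists x, lam B x a != a.
  apply/existsP; apply: contraR ha => /existsPn h.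
  by apply: FixI => x; apply/eqP; move: (h x); rewrite negbK.
exists a, (lam B x a); split.
- by apply/orbitP; exists o1; rewrite lam1.
- by apply/orbitP; exists x.
- by rewrite eq_sym.
Qed.

Lemma orbit_fix a : a \in Fixb B -> #|lam_orbit B a| <= 1.
Proof.
move=> ha; apply/card_le1_eqP => x y /orbitP [u ->] /orbitP [v ->].
by rewrite !(FixE ha).
Qed.

Lemma card_orbit a : #|T| = #|lam_orbit B a| * #|[set x | lam B x a == a]|.
Proof.
have -> : #|T| = \sum_(x : T) 1 by rewrite sum1_card.
rewrite (partition_big (fun x => lam B x a) (mem (lam_orbit B a))) /=;
  last by move=> i _; apply/orbitP; exists i.
rewrite -sum_nat_const; apply: eq_bigr => j /orbitP [y ->].
rewrite sum1dep_card.
have -> : [set x | true && (lam B x a == lam B y a)] =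
   [set y \* u | u in [set x | lam B x a == a]].
  apply/setP => i; rewrite !inE; apply/idP/imsetP.
    move=> /eqP hi; exists (cinv B y \* i); last by rewrite cA circV c1.
    by rewrite inE lamM hi lamK.
  by case=> u; rewrite inE => /eqP hu ->; rewrite lamM hu eqxx.
by rewrite card_imset //; move=> u v; apply: circI.
Qed.
End Brace.
Section Main.
Variables (T : finType) (B : skew_brace T).
Hypothesis Hv : #|Lambda_vertices B| = 1.
Local Notation "x \+ y" := (add B x y) (at level 50, left associativity).
Local Notation "\- x" := (opp B x) (at level 35).
Local Notation "x \* y" := (circ B x y) (at level 40, left associativity).
Local Notation z := (zero B).
Local Notation o1 := (@Defs.one _ B).
Local Notation aA := (@addA _ B). Local Notation a0 := (@add0r _ B). Local Notation aN := (@addNr _ B).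
Local Notation F := (Fixb B).

Lemma vert_uniq a b : a \notin F -> b \notin F -> lam_orbit B a = lam_orbit B b.
Proof.
have /cards1P [V hV] : #|Lambda_vertices B| == 1 by rewrite Hv.
have hv c : c \notin F -> lam_orbit B c = V.
  move=> hc; have : lam_orbit B c \in Lambda_vertices B.
    by apply: imset_f; rewrite inE orbit_gt1.
  by rewrite hV inE => /eqP.
by move=> ha hb; rewrite (hv a ha) (hv b hb).
Qed.

Variables (x0 : T) (hx0 : x0 \notin F).

Lemma orbit_x0 : lam_orbit B x0 = ~: F.
Proof.
apply/setP => y; rewrite inE; apply/idP/idP.
  case/orbitP => x ->; apply: contra hx0 => hF.
  by rewrite -(lamK B x x0) (FixE hF).
move=> hy; rewrite (vert_uniq hx0 hy); apply/orbitP; exists o1; by rewrite lam1.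
Qed.

Lemma decomp y : y \notin F -> \- x0 \+ y \in F.
Proof.
move=> hy.
pose S := [set x0 \+ f | f in F].
have hS : S \subset ~: F.
  apply/subsetP => u /imsetP [f hf ->]; rewrite inE; apply: contra hx0 => h.
  by rewrite -(addrK B x0 f); apply: FixD => //; apply: FixN.
have cS : #|S| = #|F| by rewrite card_imset //; move=> u v; apply: addI.
have co := card_orbit B x0; rewrite orbit_x0 in co.
have cc := cardsC F.
have c1 : 0 < #|F| by apply/card_gt0P; exists z; apply: Fix0.
have c2 := subset_leq_card hS.
have e : #|S| = #|~: F|.
  move: co cc c1 c2; rewrite cS.
  set n := #|T|; set m := #|F|; set o := #|~: F|; set k := #|_|.
  move=> co cc c1 c2.
  case: k co => [|[|k]] co; nia.
have := subset_cardP e hS; move/(_ y); rewrite inE hy => /imsetP [f hf ->].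
by rewrite addKr.
Qed.

Definition psi a := \- x0 \+ lam B a x0.

Lemma lam_x0 a : lam B a x0 = x0 \+ psi a.
Proof. by rewrite /psi addNKr. Qed.

Lemma psiF a : psi a \in F.
Proof.
apply: decomp; rewrite -in_setC -orbit_x0; apply/orbitP; by exists a.
Qed.

Lemma psiM a b : psi (a \* b) = psi a \+ psi b.
Proof.
by rewrite /psi lamM lam_x0 lamD (FixE (psiF b)) addKr aA.
Qed.

Lemma psi_surj f : f \in F -> exists a, psi a = f.
Proof.
move=> hf.
have : x0 \+ f \in lam_orbit B x0.
  rewrite orbit_x0 inE; apply: contra hx0 => h.
  by rewrite -(addrK B x0 f); apply: FixD => //; apply: FixN.
by case/orbitP => a ha; exists a; rewrite /psi -ha addKr.
Qed.

Lemma psi_ker a : psi a = z <-> a \in kerlam B.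
Proof.
split; last first.
  by move=> /kerE h; rewrite /psi h aN.
move=> h0; apply: kerI => b.
have hl : lam B a x0 = x0 by rewrite lam_x0 h0 addr0.
case hb: (b \in F); first by rewrite (FixE hb).
have := decomp (negbT hb); set f := _ \+ b => hf.
have -> : b = x0 \+ f by rewrite /f addNKr.
by rewrite lamD hl (FixE hf).
Qed.

Lemma psi1 : psi o1 = z.
Proof. by rewrite /psi lam1 aN. Qed.

Lemma psiV a : psi (cinv B a) = \- psi a.
Proof. by apply: oppU; rewrite -psiM circV psi1. Qed.

Lemma conj_inv f : f \in F -> x0 \+ f \+ \- x0 = \- f.
Proof.
move=> hf; have [a <-] := psi_surj hf.
have hg := @decomp (\- x0).
have hn : \- x0 \notin F by apply: contra hx0 => h; rewrite -(oppK B x0); apply: FixN.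
have g0F := hg hn.
have e1 : \- x0 = x0 \+ (\- x0 \+ \- x0) by rewrite addNKr.
have := lamN B a x0; rewrite {1}e1 lamD (FixE g0F) lam_x0 => e2.
by apply: (@addIr _ B (\- x0)); rewrite -oppD -e2 !aA.
Qed.

End Main.

Theorem mainTheorem13 (T : finType) (B : skew_brace T) :
  #|Lambda_vertices B| = 1 ->
  (exists phi : T -> T,
      (forall a b, phi (circ B a b) = add B (phi a) (phi b)) /\
      (forall a, phi a \in Fixb B) /\
      (forall f, f \in Fixb B -> exists a, phi a = f) /\
      (forall a, phi a = zero B <-> a \in kerlam B)) /\
  (forall f g, f \in Fixb B -> g \in Fixb B -> add B f g = add B g f) /\
  (forall a b, circ B (circ B a b) (cinv B (circ B b a)) \in kerlam B) /\
  (forall f x, f \in Fixb B -> x \notin Fixb B ->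
      add B (add B x f) (opp B x) = opp B f).
Proof.
move=> Hv.
have [x0 hx0] : exists x0, x0 \notin Fixb B.
  have /card_gt0P [V] : 0 < #|Lambda_vertices B| by rewrite Hv.
  case/imsetP => a; rewrite inE => ha _; exists a.
  by apply: contraL ha => /orbit_fix; rewrite leqNgt.
have comm f g : f \in Fixb B -> g \in Fixb B -> add B f g = add B g f.
  move=> hf hg; apply: (@oppK_inj T B).
  rewrite -(conj_inv Hv hx0 (FixD hf hg)) oppD -(conj_inv Hv hx0 hg) -(conj_inv Hv hx0 hf).
  by rewrite !addA addrNK.
split.
  exists (psi B x0); split; first apply: (psiM Hv hx0).
  split; first apply: (psiF Hv hx0).
  split; first apply: (psi_surj Hv hx0).
  apply: (psi_ker Hv hx0).
split; first exact: comm.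
split.
  move=> a b; apply/(psi_ker Hv hx0).
  rewrite (psiM Hv hx0) (psiV Hv hx0) !(psiM Hv hx0) (comm _ _ (psiF Hv hx0 a) (psiF Hv hx0 b)).
  exact: addrN.
by move=> f x hf hx; apply: conj_inv.
Qed.
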